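(* Let $k\ge1$ be an integer and $\alpha>\beta>0$. Then $$ \Big[-qs-\tfrac23\sqrt{(1-q^2)(1-s^2)},\,-qs\Big]\subset\mathcal J=(\gamma_{-1},\gamma_1). $$
   Context: Put $\eta=\alpha-\beta$, $\sigma=\alpha+\beta$, $r=2k+\alpha+\beta+1$, $\rho=r-1$, $q=\eta/r$, $s=\sigma/r$, and $\gamma_j=\frac{j\sqrt{(\rho^2-\eta^2)(\rho^2-\sigma^2)}-\eta\sigma}{\rho^2}$ for $j=\pm1$. *)

(* Defs.v *)
From Stdlib Require Import Reals.
Open Scope R_scope.

Definition eta_ (a b : R) : R := a - b.
Definition sigma_ (a b : R) : R := a + b.
Definition r_ (k : nat) (a b : R) : R := 2 * INR k + a + b + 1.
Definition rho_ (k : nat) (a b : R) : R := r_ k a b - 1.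
Definition q_ (k : nat) (a b : R) : R := eta_ a b / r_ k a b.
Definition s_ (k : nat) (a b : R) : R := sigma_ a b / r_ k a b.
(* gamma_j for j = +1 / -1, here j : R with j = 1 or j = -1 *)
Definition gamma_ (j : R) (k : nat) (a b : R) : R :=
  let rho := rho_ k a b in
  let et := eta_ a b in
  let si := sigma_ a b in
  (j * sqrt ((rho^2 - et^2) * (rho^2 - si^2)) - et * si) / rho^2.

(* Main.v *)
Require Import Defs.
From Stdlib Require Import Reals Lra Psatz.
Open Scope R_scope.

Theorem lemma9 (k : nat) (a b : R) :
  (1 <= k)%nat -> 0 < b -> b < a ->
  forall x : R,
    - q_ k a b * s_ k a b
      - (2 / 3) * sqrt ((1 - (q_ k a b)^2) * (1 - (s_ k a b)^2)) <= x ->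
    x <= - q_ k a b * s_ k a b ->
    gamma_ (-1) k a b < x /\ x < gamma_ 1 k a b.
Proof.
  intros Hk Hb Hab x H1 H2.
  unfold gamma_, q_, s_, rho_, r_, eta_, sigma_ in *.
  assert (HK : 1 <= INR k) by (apply (le_INR 1) in Hk; simpl in Hk; lra).
  set (K := INR k) in *.
  set (p := 2 * K + a + b) in *.
  replace (p + 1 - 1) with p by ring.
  assert (Hp : p >= 2 + a + b) by (unfold p; lra).
  set (e := a - b) in *. set (s := a + b) in *.
  assert (He : 0 < e) by (unfold e; lra).
  assert (Hes : e < s) by (unfold e, s; lra).
  assert (Hps : p >= 2 + s) by (unfold s; lra).
  assert (Hr : 0 < p + 1) by lra.
  set (A := p^2 - e^2). set (B := p^2 - s^2).
  assert (HB : B >= 4 + 4 * s) by (unfold B; nra).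
  assert (HAB : A >= B) by (unfold A, B; nra).
  assert (HS : sqrt (A * B) ^ 2 = A * B) by (simpl; rewrite Rmult_1_r; apply sqrt_sqrt; nra).
  assert (HS0 := sqrt_pos (A * B)).
  set (S := sqrt (A * B)) in *.
  assert (HSB : S >= B) by nra.
  set (Tin := (1 - (e / (p + 1)) ^ 2) * (1 - (s / (p + 1)) ^ 2)).
  assert (HTin : Tin = ((p+1)^2 - e^2) * ((p+1)^2 - s^2) / (p+1)^4)
    by (unfold Tin; field; apply Rgt_not_eq; lra).
  assert (HTin0 : 0 <= Tin).
  { rewrite HTin. apply Rmult_le_pos; [apply Rmult_le_pos; nra|].
    apply Rlt_le, Rinv_0_lt_compat; apply pow_lt; lra. }
  assert (HT : sqrt Tin ^ 2 = Tin) by (simpl; rewrite Rmult_1_r; apply sqrt_sqrt; lra).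
  assert (HT0 := sqrt_pos Tin).
  set (T := sqrt Tin) in *.
  set (U := (p+1)^2 * T).
  assert (HU0 : 0 <= U) by (unfold U; nra).
  assert (HU : U^2 = ((p+1)^2 - e^2) * ((p+1)^2 - s^2)).
  { unfold U. rewrite Rpow_mult_distr, HT, HTin. field. lra. }
  assert (Hc : p^2 * ((p+1)^2 - e^2) = (p+1)^2 * A + e^2 * (2*p+1)) by (unfold A; ring).
  assert (Hd : p^2 * ((p+1)^2 - s^2) = (p+1)^2 * B + s^2 * (2*p+1)) by (unfold B; ring).
  assert (Key : 2 * p^2 * U < 3 * (p+1)^2 * S + 3 * e * s * (2*p+1)).
  { set (c := 2*p+1) in *. set (r := p+1) in *.
    assert (Hc0 : 0 < c) by (unfold c; lra).
    assert (HA0 : 0 < A) by lra.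
    assert (E1 : 4 * c * s^2 <= 5 * r^2 * B).
    { assert (c <= 2 * r) by (unfold c, r; lra).
      assert (s < r) by (unfold r; lra).
      assert (0 < s) by (unfold s; lra).
      assert (4*c*s^2 <= 8*r*s^2) by nra.
      assert (0 < r*s) by nra.
      assert (r*s*s <= r*s*r) by nra.
      assert (8*r*s^2 <= 5*r^2*(4+4*s)) by nra.
      nra. }
    assert (E2 : 4 * c * B * e^2 < 18 * e * s * c * S).
    { assert (0 < c * B * e) by (apply Rmult_lt_0_compat; [|lra]; nra).
      assert (4 * e <= 18 * s) by lra.
      assert (c * B * e * (4*e) < c*B*e*(18 * s)) by nra.
      assert (0 < e * s * c) by (apply Rmult_lt_0_compat; [|lra]; nra).
      nra. }
    assert (E3 : 4 * c * A * s^2 <= 5 * r^2 * A * B) by nra.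
    assert (Sq : (2 * p^2 * U)^2 < (3 * r^2 * S + 3 * e * s * c)^2).
    { replace ((2 * p^2 * U)^2) with (4 * (p^2 * (r^2 - e^2)) * (p^2 * (r^2 - s^2)))
        by (replace ((2 * p^2 * U)^2) with (4 * p^4 * U^2) by ring; rewrite HU; ring).
      rewrite Hc, Hd.
      replace ((3 * r^2 * S + 3 * e * s * c)^2) with
        (9 * r^4 * S^2 + 18 * r^2 * (e*s*c*S) + 9 * e^2*s^2*c^2) by ring.
      rewrite HS.
      assert (0 < r^2) by (unfold r; nra).
      assert (r^2 * (4 * c * B * e^2) < r^2 * (18 * e * s * c * S)) by nra.
      assert (r^2 * (4 * c * A * s^2) <= r^2 * (5 * r^2 * A * B)) by nra.
      nra. }
    assert (0 <= 3 * r^2 * S + 3 * e * s * c).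
    { assert (0 <= r^2 * S) by (apply Rmult_le_pos; nra).
      assert (0 <= e*s*c) by (apply Rmult_le_pos; [|lra]; nra). lra. }
    assert (0 <= 2 * p^2 * U) by (apply Rmult_le_pos; nra).
    nra. }
  assert (Hp2 : 0 < p^2) by nra.
  split.
  - apply Rlt_le_trans with (2 := H1).
    change (sqrt ((1 - (e / (p + 1)) ^ 2) * (1 - (s / (p + 1)) ^ 2))) with T.
    match goal with |- ?L0 < ?R0 =>
      assert (Eq : R0 - L0 = (3 * (p+1)^2 * S + 3 * e * s * (2*p+1) - 2 * p^2 * U) / (3 * p^2 * (p+1)^2))
        by (unfold U; field; split; lra) end.
    assert (0 < (3 * (p+1)^2 * S + 3 * e * s * (2*p+1) - 2 * p^2 * U) / (3 * p^2 * (p+1)^2)).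
    { apply Rdiv_lt_0_compat; [lra|]. assert (0 < (p+1)^2) by nra. nra. }
    lra.
  - apply Rle_lt_trans with (1 := H2).
    match goal with |- ?L0 < ?R0 =>
      assert (Eq : R0 - L0 = ((p+1)^2 * S - e * s * (2*p+1)) / (p^2 * (p+1)^2))
        by (field; split; lra) end.
    assert (0 < ((p+1)^2 * S - e * s * (2*p+1)) / (p^2 * (p+1)^2)).
    { apply Rdiv_lt_0_compat.
      2: { assert (0 < (p+1)^2) by (apply pow_lt; lra). apply Rmult_lt_0_compat; lra. }
      assert (0 < s) by (unfold s; lra).
      set (c := 2*p+1) in *. set (r := p+1) in *.
      assert (0 < c) by (unfold c; lra).
      assert (s < r) by (unfold r; lra).
      assert (0 < (s - e) * (s * c)) by (apply Rmult_lt_0_compat; [lra| apply Rmult_lt_0_compat; lra]).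
      assert (c <= 2 * r) by (unfold c, r; lra).
      assert (0 <= (2*r - c) * (s*s)) by (apply Rmult_le_pos; [lra| apply Rmult_le_pos; lra]).
      assert (0 <= r^2 * (S - B)) by (apply Rmult_le_pos; [apply pow_le; lra| lra]).
      assert (0 < (r - s) * (2 * r * s)) by (apply Rmult_lt_0_compat; [lra| apply Rmult_lt_0_compat; lra]).
      assert (0 <= r^2 * (B - (4 + 4*s))) by (apply Rmult_le_pos; [apply pow_le; lra| lra]).
      assert (0 < r^2 * (4 + 2*s)) by (apply Rmult_lt_0_compat; [apply pow_lt; lra| lra]).
      assert (E : r^2 * S - e * s * c =
        (s - e) * (s * c) + (2*r - c) * (s*s) + r^2 * (S - B) + (r - s) * (2 * r * s)
        + r^2 * (B - (4 + 4*s)) + r^2 * (4 + 2*s)) by ring.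
      rewrite E. lra. }
    lra.
Qed.
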